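(* For every integer $k\geq 1$, the following identity of formal power series in $q$ holds: \[ \sum_{n\geq 0} b(n,k)\, q^n=\frac{1}{1-q}\left(\sum_{t\geq 1} q^{\binom{t}{2}k^2}\,\frac{1-q^{tk^2}}{1-q^{tk}}-1\right). \]
   Context: A partition $\lambda=(\lambda_1\geq\lambda_2\geq\cdots\geq\lambda_r>0)$ of $n$ is identified with its Young diagram. For a cell $u$ of the Young diagram, the hook length $h_u(\lambda)$ is the number of cells $v$ of the diagram with $v=u$, or $v$ below $u$ in the same column, or $v$ to the right of $u$ in the same row. For $k\geq 1$, $\alpha_k(\lambda)$ denotes the number of cells of the Young diagram of $\lambda$ whose hook length equals $k$ (the number of $k$-hooks of $\lambda$). Let $P(n)$ be the set of partitions of $n$ (with $P(0)$ containing only the empty partition), and $b(n,k)=\max\{\alpha_k(\lambda)\colon \lambda\in P(n)\}$. *)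

(* Defs.v *)
From mathcomp Require Import all_boot all_order all_algebra.
Set Implicit Arguments. Unset Strict Implicit. Unset Printing Implicit Defensive.
Import GRing.Theory Num.Theory.

Definition is_partition (l : seq nat) : bool :=
  sorted (fun x y => y <= x) l && all (fun x => 0 < x) l.

Definition partition_of (n : nat) (l : seq nat) : bool :=
  is_partition l && (sumn l == n).

(* Cell (i,j) (row i, column j, 0-indexed) lies in the Young diagram of l
   iff i < size l and j < nth 0 l i.  Its hook length: cells in the same row
   weakly to the right (nth 0 l i - j, including the cell itself) plus cells
   strictly below in the same column (rows r > i with l_r > j). *)
Definition hook (l : seq nat) (i j : nat) : nat :=
  (nth 0 l i - j) + count (fun r => j < r) (drop i.+1 l).

Definition alpha (k : nat) (l : seq nat) : nat :=
  \sum_(i < size l) \sum_(j < nth 0 l i) (hook l i j == k : nat).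

(* Every partition of n has at most n parts, each at most n, so it is
   obtained (uniquely) from an n-tuple of values in {0..n} by deleting zeros.
   This gives a finite index set for the maximum over P(n). *)
Definition tseq (n : nat) (s : n.-tuple 'I_n.+1) : seq nat :=
  filter (fun x => 0 < x) (map val s).

Definition b (n k : nat) : nat :=
  \max_(s : n.-tuple 'I_n.+1 | partition_of n (tseq s)) alpha k (tseq s).

Local Open Scope ring_scope.

Definition fps := nat -> int.

Definition fps_one : fps := fun n => if n == 0%N then 1 else 0.
Definition fps_mono (m : nat) : fps := fun n => if n == m then 1 else 0.
Definition fps_add (f g : fps) : fps := fun n => f n + g n.
Definition fps_sub (f g : fps) : fps := fun n => f n - g n.
Definition fps_mul (f g : fps) : fps :=
  fun n => \sum_(i < n.+1) f i * g (n - i)%N.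
Definition fps_pow (f : fps) (j : nat) : fps := iter j (fps_mul f) fps_one.
(* Inverse of a series g with constant term 1:  1/g = sum_{j>=0} (1-g)^j,
   which is locally finite since (1-g)^j has order >= j. *)
Definition fps_inv (g : fps) : fps :=
  fun n => \sum_(j < n.+1) fps_pow (fps_sub fps_one g) j n.
Definition fps_div (f g : fps) : fps := fps_mul f (fps_inv g).

(* Convergence of an infinite sum sum_{t>=1} F t to S in the usual
   (q-adic) topology of formal power series: every coefficient of the
   partial sums is eventually constant equal to that of S. *)
Definition fps_sum_from1 (F : nat -> fps) (S : fps) : Prop :=
  forall n : nat, exists N : nat, forall M : nat, (N <= M)%N ->
    \sum_(1 <= t < M) F t n = S n.

(* Main.v *)
Require Import Defs.
From mathcomp Require Import all_boot all_order all_algebra zify ring lra.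
From Stdlib Require Import FunctionalExtensionality.
Import GRing.Theory Num.Theory.
Set Implicit Arguments. Unset Strict Implicit. Unset Printing Implicit Defensive.

Fixpoint beta (l : seq nat) : seq nat :=
  if l is x :: l' then (x + size l') :: beta l' else [::].

Definition top (k x : nat) (l : seq nat) : nat :=
  \sum_(j < x) (x - j + count (fun r => j < r) l == k).

Lemma alpha_cons k x l : alpha k (x :: l) = top k x l + alpha k l.
Proof.
rewrite /alpha /= big_ord_recl /=. congr (_ + _).
apply: eq_bigr => j _. by rewrite /hook /= drop0.
Qed.

Lemma sum_eqk n k : \sum_(j < n) (n - j == k) = (0 < k) && (k <= n).
Proof.
elim: n => [|n IH]; first by rewrite big_ord0; case: k.
rewrite big_ord_recl /= subn0.
rewrite (eq_bigr (fun j : 'I_n => (n - j == k) : nat)); last first.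
  by move=> j _; rewrite /bump /= add1n subSS.
rewrite IH. case: k {IH} => [|k] //=.
by rewrite ltnS eqSS; case: (ltngtP k n).
Qed.

Lemma geq_tr : transitive geq.
Proof. move=> y x z /= h1 h2. exact: leq_trans h2 h1. Qed.

Lemma sorted_cons_le x l : sorted geq (x :: l) -> all (fun r => r <= x) l.
Proof.
move=> H. have := order_path_min geq_tr H.
by apply: sub_all => r.
Qed.

Lemma beta_lt x l : sorted geq (x :: l) -> forall z, z \in beta l -> z < x + size l.
Proof.
elim: l x => [|y l IH] x //= /andP [yx Hs] z.
rewrite inE => /orP [/eqP ->|zin]; first by rewrite addnS ltnS leq_add2r.
have := IH y Hs z zin. move=> h. rewrite addnS. apply: ltnW. apply: (leq_trans h). by rewrite leq_add2r.
Qed.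

Lemma beta_uniq l : sorted geq l -> uniq (beta l).
Proof.
elim: l => [|x l IH] //= Hs. rewrite IH ?(path_sorted Hs) // andbT.
apply/negP => /(beta_lt Hs). by rewrite ltnn.
Qed.

Lemma sumn_beta l : sumn (beta l) = sumn l + 'C(size l, 2).
Proof.
elim: l => [|x l IH] //=. rewrite IH binS bin1. lia.
Qed.

Lemma top_beta l : forall k x, 0 < k -> sorted geq (x :: l) ->
  top k x l = ((k <= x + size l) && (x + size l - k \notin beta l)).
Proof.
elim: l => [|y l IH] k x k0 Hs.
  rewrite /top (eq_bigr (fun j : 'I_x => (x - j == k) : nat)).
    by rewrite sum_eqk k0 addn0 andbT.
  by move=> j _; rewrite /= addn0.
move: (Hs) => /= /andP [yx Hs'].
have Hall := sorted_cons_le Hs'.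
rewrite /top -(big_mkord xpredT (fun j => (x - j + count (fun r => j < r) (y :: l) == k) : nat)).
rewrite (big_cat_nat (leq0n y) yx) /=.
have E2 : \sum_(y <= j < x) ((x - j + count (fun r => j < r) (y :: l) == k) : nat)
          = \sum_(y <= j < x) ((x - j == k) : nat).
  rewrite big_nat_cond [RHS]big_nat_cond. apply: eq_bigr => j /andP [/andP [yj _] _].
  rewrite /= ltnNge yj /= add0n.
  have -> : count (fun r => j < r) l = 0.
    apply/eqP. rewrite -leqn0 leqNgt -has_count. apply/hasP => [[r rin jr]].
    move/allP: Hall => /(_ r rin) ry. move: (leq_trans ry yj). by rewrite leqNgt jr.
  by rewrite addn0.
rewrite E2.
have E3 : \sum_(y <= j < x) ((x - j == k) : nat) = (0 < k) && (k <= x - y).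
  rewrite -{1}(add0n y) big_addn big_mkord -sum_eqk. apply: eq_bigr => j _.
  by rewrite addnC subnDA.
rewrite E3 k0 /=.
have E1 : forall j, j < y -> (x - j + count (fun r => j < r) (y :: l) == k)
     = (y - j + count (fun r => j < r) l == k - (x - y + 1)) && (x - y + 1 < k).
  move=> j jy. rewrite /= jy add1n addnS.
  case: (ltnP (x - y + 1) k) => H; rewrite ?andbT ?andbF.
  - apply/eqP/eqP; lia.
  - apply/negbTE. apply/eqP. lia.
have [Hk|Hk] := ltnP (x - y + 1) k.
-
  have -> : k <= x - y = false by apply/negbTE; rewrite -ltnNge; lia.
  rewrite addn0.
  rewrite big_nat_cond (eq_bigr (fun j => (y - j + count (fun r => j < r) l == k - (x - y + 1)) : nat)); last first.
    by move=> j /andP [/andP [_ jy] _]; rewrite E1 // Hk andbT.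
  rewrite -big_nat_cond big_mkord.
  have := IH (k - (x - y + 1)) y. rewrite /top => ->; last 2 first.
  + by rewrite subn_gt0.
  + exact: Hs'.
  rewrite inE negb_or.
  have -> : (k - (x - y + 1) <= y + size l) = (k <= x + (size l).+1) by apply/idP/idP; lia.
  have -> : y + size l - (k - (x - y + 1)) = x + (size l).+1 - k by lia.
  case: (leqP k (x + (size l).+1)) => Hk2 //=.
  have -> : (x + (size l).+1 - k != y + size l) = true by apply/eqP; lia.
  by [].
- rewrite big_nat_cond big1; last first.
    by move=> j /andP [/andP [_ jy] _]; rewrite E1 // ltnNge Hk andbF.
  rewrite add0n.
  case: (leqP k (x - y)) => Hk2 /=.
  + have -> : k <= x + (size l).+1 by lia.
    rewrite inE negb_or /=.
    have -> : (x + (size l).+1 - k != y + size l) = true by apply/eqP; lia.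
    have -> : (x + (size l).+1 - k \notin beta l) = true; last by []. apply/negP => /(beta_lt Hs'). lia.
  + have -> : x + (size l).+1 - k = y + size l by lia.
    by rewrite inE eqxx /= andbF.
Qed.

Definition A (k : nat) (X : seq nat) : nat :=
  count (fun z => (k <= z) && (z - k \notin X)) X.

Lemma alpha_beta k l : 0 < k -> sorted geq l -> alpha k l = A k (beta l).
Proof.
move=> k0. elim: l => [|x l IH] Hs; first by rewrite /alpha /A /= big_ord0.
rewrite alpha_cons IH ?(path_sorted Hs) // top_beta // /A /= inE negb_or.
congr (_ + _).
- case: (leqP k (x + size l)) => H //=. have -> : x + size l - k != x + size l by apply/eqP; lia.
  by [].
- apply: eq_in_count => z zin /=. have := beta_lt Hs zin => zlt.
  rewrite inE negb_or; case: (k <= z) => //=. have -> : z - k != x + size l by apply/eqP; lia. by [].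
Qed.

Definition cnt (Y : seq nat) : nat := count (fun a => (0 < a) && (a.-1 \notin Y)) Y.
Definition runner (k : nat) (X : seq nat) (j : nat) : seq nat :=
  [seq z %/ k | z <- X & z %% k == j].

Lemma count_sum (T : Type) (a : pred T) (r : seq T) : count a r = \sum_(x <- r) (a x : nat).
Proof. elim: r => [|x r IH] /=; by rewrite ?big_nil ?big_cons ?IH. Qed.

Lemma divmod_eq k a j : 0 < k -> j < k -> (a * k + j) %/ k = a /\ (a * k + j) %% k = j.
Proof.
move=> k0 jk. rewrite divnMDl // divn_small // addn0 modnMDl modn_small //.
Qed.

Lemma runner_mem k X j a : 0 < k -> j < k -> (a \in runner k X j) = (a * k + j \in X).
Proof.
move=> k0 jk. apply/mapP/idP.
- move=> [z]; rewrite mem_filter => /andP [/eqP zj zX] ->.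
  by rewrite -zj -divn_eq.
- move=> H. exists (a * k + j); last by case: (divmod_eq a k0 jk).
  rewrite mem_filter H andbT. by case: (divmod_eq a k0 jk) => _ ->.
Qed.

Lemma runner_uniq k X j : uniq X -> uniq (runner k X j).
Proof.
move=> uX. rewrite map_inj_in_uniq ?filter_uniq //.
move=> z1 z2; rewrite !mem_filter => /andP [/eqP h1 _] /andP [/eqP h2 _] e.
by rewrite (divn_eq z1 k) (divn_eq z2 k) e h1 h2.
Qed.

Lemma sum_if_eq_nat N c (G : nat -> nat) :
  \sum_(j < N) (if (j : nat) == c then G j else 0) = if c < N then G c else 0.
Proof.
elim: N => [|N IH]; first by rewrite big_ord0.
rewrite big_ord_recr /= IH. case: (ltngtP c N) => H.
- by rewrite addn0 ltnS ltnW.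
- by rewrite ltnS leqNgt H.
- by rewrite H ltnSn.
Qed.

Lemma sum_runner k X (F : nat -> nat) : 0 < k ->
  \sum_(z <- X) F z = \sum_(j < k) \sum_(a <- runner k X j) F (a * k + j).
Proof.
move=> k0.
rewrite (eq_bigr (fun z => \sum_(j < k) (if (j : nat) == z %% k then F z else 0))); last first.
  by move=> z _; rewrite (sum_if_eq_nat k (z %% k) (fun _ => F z)) ltn_pmod.
rewrite exchange_big /=. apply: eq_bigr => j _.
rewrite /runner big_map big_filter_cond [RHS]big_mkcond /=.
apply: eq_big_seq => z zX. rewrite andbT.
case: (eqVneq (z %% k) (j:nat)) => [zj|nzj].
- by rewrite -zj -divn_eq.
- by [].
Qed.

Lemma sumn_runner k X : 0 < k ->
  sumn X = \sum_(j < k) (k * sumn (runner k X j) + j * size (runner k X j)).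
Proof.
move=> k0. rewrite sumnE (sum_runner _ (fun z => z) k0). apply: eq_bigr => j _.
rewrite sumnE big_distrr /= -sum1_size big_distrr -big_split /=.
apply: eq_bigr => a _. by rewrite muln1 mulnC.
Qed.

Lemma size_runner k X : 0 < k -> size X = \sum_(j < k) size (runner k X j).
Proof.
move=> k0. rewrite -sum1_size (sum_runner _ (fun z => 1) k0). apply: eq_bigr => j _.
by rewrite sum1_size.
Qed.

Lemma A_runner k X : 0 < k -> A k X = \sum_(j < k) cnt (runner k X j).
Proof.
move=> k0. rewrite /A count_sum (sum_runner _ _ k0). apply: eq_bigr => j _.
rewrite /cnt count_sum. apply: eq_big_seq => a ain.
have jk : j < k by [].
case: a ain => [|a] ain /=.
  by rewrite mul0n add0n leqNgt jk.
have -> : k <= a.+1 * k + j by rewrite mulSn -addnA leq_addr.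
have -> : a.+1 * k + j - k = a * k + j by rewrite mulSn -addnA addKn.
by rewrite runner_mem.
Qed.

Lemma cnt_perm Y Y' : perm_eq Y Y' -> cnt Y = cnt Y'.
Proof.
move=> H. rewrite /cnt. move/permP: (H) => ->. apply: eq_count => a.
by rewrite (perm_mem H).
Qed.

Lemma cnt_cons_max y Y : all (fun z => z < y) Y ->
  cnt (y :: Y) = ((0 < y) && (y.-1 \notin Y)) + cnt Y.
Proof.
move=> Hall. rewrite /cnt /= inE negb_or.
congr (_ + _).
- case: y Hall => [|y] //= _. by rewrite (ltn_eqF (ltnSn y)).
- apply: eq_in_count => a ain /=. rewrite inE negb_or.
  have := allP Hall a ain. case: a ain => [|a] //= _ ay.
  by rewrite (ltn_eqF (ltnW ay)).
Qed.

Lemma rem_facts y Y : uniq Y -> all (fun z => z < y.+1) Y -> y \in Y ->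
  [/\ perm_eq Y (y :: rem y Y), uniq (rem y Y), y \notin rem y Y &
      all (fun z => z < y) (rem y Y)].
Proof.
move=> uY Hall yin. split.
- exact: perm_to_rem.
- exact: rem_uniq.
- by rewrite (mem_rem_uniq _ uY) inE eqxx.
- apply/allP => z. rewrite (mem_rem_uniq _ uY) inE => /andP [zy zin].
  have := allP Hall z zin. by rewrite ltnS leq_eqVlt (negbTE zy).
Qed.

Lemma gap_bound y : forall Y, uniq Y -> all (fun z => z < y) Y ->
  size Y + cnt Y + ((0 < y) && (y.-1 \notin Y)) <= y.
Proof.
elim: y => [|y IH] Y uY Hall.
  by case: Y uY Hall => [|z Y].
case: (boolP (y \in Y)) => yin.
- have [P uY' ny Hall'] := rem_facts uY Hall yin.
  rewrite (perm_size P) (cnt_perm P) /= addn0 (cnt_cons_max Hall').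
  have := IH _ uY' Hall'. set b := (_ && _). case: b => /=; lia.
- have Hall' : all (fun z => z < y) Y.
    apply/allP => z zin. have := allP Hall z zin. rewrite ltnS leq_eqVlt.
    case/orP => // /eqP zy. by rewrite -zy zin in yin.
  have := IH _ uY Hall'. rewrite /=. set b := (_ && _). case: b; lia.
Qed.

Lemma runner_bound_y y : forall Y, uniq Y -> all (fun z => z < y) Y ->
  'C(size Y, 2) + 'C(cnt Y + 1, 2) <= sumn Y.
Proof.
elim: y => [|y IH] Y uY Hall.
  by case: Y uY Hall.
case: (boolP (y \in Y)) => yin.
- have [P uY' ny Hall'] := rem_facts uY Hall yin.
  rewrite (perm_size P) (cnt_perm P) (perm_sumn P) /= (cnt_cons_max Hall').
  have h1 := IH _ uY' Hall'. have h2 := gap_bound uY' Hall'.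
  move: h1 h2. set b := (0 < y) && _. set c := cnt _. set s := size _.
  rewrite binS bin1.
  case: b => /=; last by rewrite add0n; lia.
  have e : 1 + c + 1 = (c + 1).+1 by lia. rewrite e binS bin1. lia.
- have Hall' : all (fun z => z < y) Y.
    apply/allP => z zin. have := allP Hall z zin. rewrite ltnS leq_eqVlt.
    case/orP => // /eqP zy. by rewrite -zy zin in yin.
  exact: IH.
Qed.

Lemma mem_leq_sumn (Y : seq nat) z : z \in Y -> z <= sumn Y.
Proof.
elim: Y => [|x Y IH] //=. rewrite inE => /orP [/eqP ->|/IH h]; first exact: leq_addr.
exact: (leq_trans h (leq_addl _ _)).
Qed.

Lemma runner_bound Y : uniq Y -> 'C(size Y, 2) + 'C(cnt Y + 1, 2) <= sumn Y.
Proof.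
move=> uY. apply: (@runner_bound_y (sumn Y).+1) => //.
apply/allP => z /mem_leq_sumn. by rewrite ltnS.
Qed.

Lemma bin2_2 n : 'C(n, 2) * 2 = n * (n - 1).
Proof. elim: n => [|n IH] //. rewrite binS bin1 mulnDl IH. nia. Qed.

Lemma bin2D a b : 'C(a + b, 2) = 'C(a, 2) + 'C(b, 2) + a * b.
Proof.
apply/eqP. rewrite -(eqn_pmul2r (isT : 0 < 2)) !mulnDl !bin2_2. apply/eqP. nia.
Qed.

Lemma pair_ineq r m : r * m <= 'C(r, 2) + 'C(m.+1, 2).
Proof.
rewrite -(leq_pmul2r (isT : 0 < 2)) [X in _ <= X]mulnDl !bin2_2.
case: (leqP r m) => H; nia.
Qed.

Lemma core_ineq (R : nat -> nat) k :
  'C(\sum_(j < k) R j, 2) <= k * \sum_(j < k) 'C(R j, 2) + \sum_(j < k) j * R j.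
Proof.
elim: k => [|k IH]; first by rewrite !big_ord0.
rewrite !big_ord_recr /= bin2D.
set T := \sum_(j < k) R j. set CC := \sum_(j < k) 'C(R j, 2).
set JR := \sum_(j < k) j * R j.
have H : T * R k <= CC + k * 'C((R k).+1, 2).
  rewrite /T /CC big_distrl /=.
  have -> : k * 'C((R k).+1, 2) = \sum_(j < k) 'C((R k).+1, 2).
    by rewrite sum_nat_const card_ord.
  rewrite -big_split /=. apply: leq_sum => j _. exact: pair_ineq.
move: IH H. rewrite -/T -/CC -/JR binS bin1. nia.
Qed.

Definition g (k m : nat) : nat := k * k * 'C(m %/ k + 1, 2) + k * (m %/ k + 1) * (m %% k).

Lemma balance (c : nat -> nat) k m : 0 < k -> \sum_(j < k) c j = m ->
  g k m <= k * \sum_(j < k) 'C(c j + 1, 2).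
Proof.
move=> k0 Hm. rewrite /g.
set q := m %/ k. set i := m %% k.
have Hmq : m = q * k + i by rewrite /q /i -divn_eq.
have per : forall c0, (q + 1) * c0 <= 'C(c0 + 1, 2) + 'C(q + 1, 2).
  move=> c0. rewrite -(leq_pmul2r (isT : 0 < 2)) [X in _ <= X]mulnDl !bin2_2. case: (leqP c0 q) => H; nia.
have S : (q + 1) * m <= \sum_(j < k) 'C(c j + 1, 2) + k * 'C(q + 1, 2).
  rewrite -Hm big_distrr /=.
  have -> : k * 'C(q + 1, 2) = \sum_(j < k) 'C(q + 1, 2) by rewrite sum_nat_const card_ord.
  rewrite -big_split /=. apply: leq_sum => j _. exact: per.
move: S. set SS := \sum_(j < k) _. move=> S.
have B := bin2_2 (q + 1).
rewrite Hmq in S. nia.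
Qed.

Lemma size_beta l : size (beta l) = size l.
Proof. by elim: l => [|x l IH] //=; rewrite IH. Qed.

Lemma upper_bound k l : 0 < k -> sorted geq l -> g k (alpha k l) <= sumn l.
Proof.
move=> k0 Hs. set X := beta l.
have uX : uniq X := beta_uniq Hs.
have HA := alpha_beta k0 Hs. rewrite -/X A_runner // in HA.
rewrite HA.
have Hb0 := @balance (fun j => cnt (runner k X j)) k _ k0 (erefl (\sum_(j < k) cnt (runner k X j))).
apply: (leq_trans Hb0).
have HS := sumn_runner X k0.
have Hsz := size_runner X k0.
have Hb := sumn_beta l. rewrite -/X in Hb.
have Hsz2 : size X = size l by rewrite size_beta.
have Hc := core_ineq (fun j => size (runner k X j)) k.
rewrite -Hsz Hsz2 in Hc.
have Hr : \sum_(j < k) (k * ('C(size (runner k X j), 2) + 'C(cnt (runner k X j) + 1, 2))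
            + j * size (runner k X j)) <= sumn X.
  rewrite HS. apply: leq_sum => j _. rewrite leq_add2r leq_pmul2l //.
  exact/runner_bound/runner_uniq.
move: Hr. rewrite big_split /= -big_distrr /= big_split /= mulnDr.
move: Hb Hc. set a := \sum_(j < k) 'C(size _, 2). set b := \sum_(j < k) 'C(_ + 1, 2).
set cc := \sum_(j < k) j * _. lia.
Qed.

Lemma A_perm k X X' : perm_eq X X' -> A k X = A k X'.
Proof.
move=> H. rewrite /A. move/permP: (H) => ->. apply: eq_count => a.
by rewrite (perm_mem H).
Qed.

Lemma exists_max (X : seq nat) : X != [::] -> exists2 x, x \in X & all (fun z => z <= x) X.
Proof.
elim: X => [|y X IH] // _. case: (eqVneq X [::]) => [->|Xn].
  by exists y; rewrite ?inE ?eqxx //= leqnn.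
have [x xin Hall] := IH Xn.
case: (leqP x y) => H.
- exists y; first by rewrite inE eqxx.
  rewrite /= leqnn /=. apply/allP => z zin. exact: leq_trans (allP Hall z zin) H.
- exists x; first by rewrite inE xin orbT.
  by rewrite /= Hall (ltnW H).
Qed.

Lemma size_lt_bound x Y : uniq Y -> all (fun z => z < x) Y -> size Y <= x.
Proof. move=> uY Hall. have := gap_bound uY Hall. lia. Qed.

Lemma exists_beta_n n : forall X, size X = n -> uniq X ->
  exists l, sorted geq l /\ perm_eq (beta l) X.
Proof.
elim: n => [|n IH] X sX uX.
  exists [::]. by case: X sX uX.
have Xn : X != [::] by case: X sX uX.
have [x xin Hall] := exists_max Xn.
set X' := rem x X.
have uX' : uniq X' := rem_uniq _ uX.
have sX' : size X' = n by rewrite size_rem // sX.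
have Hall' : all (fun z => z < x) X'.
  apply/allP => z. rewrite (mem_rem_uniq _ uX) inE => /andP [zx zin].
  have := allP Hall z zin. by rewrite leq_eqVlt (negbTE zx).
have [l' [Hs' Hp']] := IH X' sX' uX'.
have szl : size l' = n by rewrite -(size_beta l') (perm_size Hp').
have xn : n <= x by rewrite -sX'; exact: size_lt_bound uX' Hall'.
exists ((x - size l') :: l'). split.
- case: l' Hs' Hp' szl => [|y l''] //= Hs' Hp' szl. rewrite Hs' andbT.
  have : y + size l'' \in X' by rewrite -(perm_mem Hp') inE eqxx.
  move=> /(allP Hall') /=. lia.
- rewrite /= subnK ?szl //. have P2 := perm_to_rem xin. rewrite perm_sym.
  apply: (perm_trans P2). by rewrite perm_cons perm_sym.
Qed.

Lemma exists_beta X : uniq X -> exists l, sorted geq l /\ perm_eq (beta l) X.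
Proof. exact: exists_beta_n. Qed.

Lemma alpha_filter k l : alpha k [seq x <- l | 0 < x] = alpha k l.
Proof.
elim: l => [|x l IH] //=.
case: x => [|x] /=.
- by rewrite IH alpha_cons /top big_ord0.
- rewrite !alpha_cons IH. congr (_ + _). apply: eq_bigr => j _.
  rewrite count_filter. congr (_ + _ == _)%N. apply: eq_count => r /=.
  by case: (ltnP j r) => //= h; apply: (leq_ltn_trans (leq0n j) h).
Qed.

Lemma sumn_filter_pos l : sumn [seq x <- l | 0 < x] = sumn l.
Proof. elim: l => [|[|x] l IH] //=; by rewrite IH. Qed.

Lemma partition_from X n M k : 0 < k -> uniq X -> sumn X = n + 'C(size X, 2) ->
  M <= A k X -> exists l, partition_of n l /\ M <= alpha k l.
Proof.
move=> k0 uX HS HA.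
have [l [Hs Hp]] := exists_beta uX.
exists [seq x <- l | 0 < x]. split.
- rewrite /partition_of /is_partition sumn_filter_pos filter_all andbT.
  apply/andP; split; first exact: (sorted_filter geq_tr).
  apply/eqP. move: HS. rewrite -(perm_sumn Hp) -(perm_size Hp) sumn_beta size_beta.
  lia.
- by rewrite alpha_filter (alpha_beta k0 Hs) (A_perm k Hp).
Qed.

Definition odds (s : nat) : seq nat := [seq b.*2.+1 | b <- iota 0 s].
Definition evens (s : nat) : seq nat := [seq b.*2.+2 | b <- iota 0 s].

Lemma odds_mem s a : (a \in odds s) = (odd a && (a < s.*2)).
Proof.
apply/mapP/andP.
- move=> [b]; rewrite mem_iota add0n => /andP [_ bs] ->.
  split; first by rewrite /= odd_double. rewrite -!muln2. lia.
- move=> [oa ha]. have e := odd_double_half a. rewrite oa -muln2 in e.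
  exists a./2; first by rewrite mem_iota add0n /=; rewrite -muln2 in ha; lia.
  rewrite -muln2. lia.
Qed.

Lemma evens_mem s a : (a \in evens s) = (~~ odd a && (0 < a) && (a <= s.*2)).
Proof.
apply/mapP/idP.
- move=> [b]; rewrite mem_iota add0n => /andP [_ bs] ->.
  rewrite /= odd_double /= -!muln2. lia.
- move=> /andP [/andP [oa a0] ha]. exists a./2.-1.
  + rewrite mem_iota add0n /=. have := odd_double_half a. rewrite (negbTE oa) add0n -muln2.
    rewrite -muln2 in ha. lia.
  + have := odd_double_half a. rewrite (negbTE oa) add0n -!muln2. lia.
Qed.

Lemma odds_uniq s : uniq (odds s).
Proof. rewrite map_inj_uniq ?iota_uniq // => a b; rewrite -!muln2; lia. Qed.

Lemma evens_uniq s : uniq (evens s).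
Proof. rewrite map_inj_uniq ?iota_uniq // => a b; rewrite -!muln2; lia. Qed.

Lemma sumn_odds s : sumn (odds s) = s * s.
Proof.
elim: s => [|s IH] //. rewrite /odds -addn1 iotaD map_cat sumn_cat -/(odds s) IH /=.
rewrite add0n addn0 -mul2n. lia.
Qed.

Lemma sumn_evens s : sumn (evens s) = s * s.+1.
Proof.
elim: s => [|s IH] //. rewrite /evens -addn1 iotaD map_cat sumn_cat -/(evens s) IH /=.
rewrite add0n addn0 -mul2n. lia.
Qed.

Lemma cnt_odds s : cnt (odds s) = s.
Proof.
rewrite /cnt -[RHS](size_iota 0 s) -(size_map (fun b => b.*2.+1)) -/(odds s) -count_predT.
apply: eq_in_count => a ain /=. move: (ain); rewrite odds_mem => /andP [oa _].
case: a ain oa => [|a] //= ain oa. by rewrite odds_mem negb_and /= oa.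
Qed.

Lemma cnt_zevens s : cnt (0 :: evens s) = s.
Proof.
rewrite /cnt /= -[RHS](size_iota 0 s) -(size_map (fun b => b.*2.+2)) -/(evens s) -count_predT.
apply: eq_in_count => a ain /=. move: (ain); rewrite evens_mem => /andP [/andP [oa a0] _].
case: a ain oa a0 => [|a] //= ain oa _.
rewrite inE evens_mem negb_or negb_and negb_and /= negbK.
move: oa => /negbNE oa. rewrite oa /=. by case: a oa ain.
Qed.

Lemma sum_eq_nat N c : \sum_(j < N) ((j : nat) == c : nat) = (c < N).
Proof.
rewrite (eq_bigr (fun j : 'I_N => if (j : nat) == c then 1 else 0)); last by move=> j _; case: eqP.
by rewrite (sum_if_eq_nat N c (fun _ => 1)); case: (c < N).
Qed.

Lemma sum_mul_eq N c : \sum_(j < N) (j * ((j : nat) == c) : nat) = if c < N then c else 0.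
Proof.
rewrite (eq_bigr (fun j : 'I_N => if (j : nat) == c then (j : nat) else 0)).
  exact: (sum_if_eq_nat N c (fun j => j)).
move=> j _. case: eqP => _; by rewrite ?muln1 ?muln0.
Qed.

Lemma sum_lt_nat N c : \sum_(j < N) ((j : nat) < c : nat) = minn N c.
Proof.
elim: N => [|N IH]; first by rewrite big_ord0 min0n.
rewrite big_ord_recr /= IH. case: (ltnP N c) => H /=; lia.
Qed.

Lemma sum_const_ord N c : \sum_(j < N) c = N * c.
Proof. by rewrite sum_nat_const card_ord. Qed.

Lemma sum_id_ord N : \sum_(j < N) (j : nat) = 'C(N, 2).
Proof. by rewrite -bin2_sum big_mkord. Qed.

Lemma sumn_cons x s : sumn (x :: s) = x + sumn s.
Proof. by []. Qed.

Section Constr.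
Variables (k q i w d : nat).
Hypotheses (k0 : 0 < k) (ik : i < k) (dk : d < k).

Definition inJ (j : nat) : bool := if d < i then (j <= i) && (j != d) else (j < i).
Definition base (j : nat) : seq nat := if inJ j then odds q.+1 else 0 :: evens q.
Definition hh : nat := q.*2 + 2 + w.
Definition Yr (j : nat) : seq nat := if j == d then hh :: base j else base j.
Definition Xc : seq nat := [seq z <- iota 0 (hh.+1 * k) | z %/ k \in Yr (z %% k)].

Lemma inJ_d : inJ d = false.
Proof. rewrite /inJ. case: ifP => H; first by rewrite eqxx andbF. by rewrite H. Qed.

Lemma sum_inJ : \sum_(j < k) (inJ j : nat) = i.
Proof.
case H: (d < i).
- rewrite (eq_bigr (fun j : 'I_k => (((j:nat) <= i) && ((j:nat) != d) : nat))); last by move=> j _; rewrite /inJ H.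
  have e2 : \sum_(j < k) (((j : nat) <= i) && ((j : nat) != d) : nat) + \sum_(j < k) ((j:nat) == d : nat)
         = \sum_(j < k) ((j : nat) < i.+1 : nat).
    rewrite -big_split /=. apply: eq_bigr => j _. rewrite ltnS.
    case: eqP => [->|_]; first by rewrite (ltnW H).
    by rewrite andbT addn0.
  move: e2. rewrite sum_lt_nat sum_eq_nat dk. move=> /= e2. lia.
- rewrite (eq_bigr (fun j : 'I_k => ((j:nat) < i : nat))); last by move=> j _; rewrite /inJ H.
  rewrite sum_lt_nat. lia.
Qed.

Lemma base_all j : all (fun z => z < hh) (base j).
Proof.
rewrite /base /hh. case: ifP => _; apply/allP => z.
- rewrite odds_mem => /andP [_ h]. rewrite -muln2 in h. rewrite -muln2. lia.
- rewrite inE evens_mem => /orP [/eqP ->|/andP [_ h]]; first lia.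
  rewrite -muln2 in h. rewrite -muln2. lia.
Qed.

Lemma base_uniq j : uniq (base j).
Proof.
rewrite /base. case: ifP => _; first exact: odds_uniq.
rewrite /= evens_uniq andbT evens_mem. by rewrite ltnn andbF.
Qed.

Lemma Yr_uniq j : uniq (Yr j).
Proof.
rewrite /Yr. case: eqP => _; last exact: base_uniq.
rewrite /= base_uniq andbT. apply/negP => /(allP (base_all j)). by rewrite ltnn.
Qed.

Lemma Yr_all j : all (fun z => z < hh.+1) (Yr j).
Proof.
rewrite /Yr. apply/allP => z. case: eqP => _; rewrite ?inE; [case/orP => [/eqP ->//|]|];
  move=> /(allP (base_all j)) h; exact: ltnW.
Qed.

Lemma size_Yr j : size (Yr j) = (j == d) + q.+1.
Proof.
rewrite /Yr /base. case: eqP => _; case: ifP => _; by rewrite /= ?size_map ?size_iota.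
Qed.

Lemma sumn_Yr j : sumn (Yr j) = (j == d) * hh + q * q.+1 + inJ j * q.+1.
Proof.
rewrite /Yr /base. case: eqP => _; rewrite ?[sumn (hh :: _)]sumn_cons; case: ifP => _; rewrite ?sumn_odds ?sumn_cons ?sumn_evens ?mul1n ?mul0n; lia.
Qed.

Lemma cnt_Yr j : cnt (Yr j) = (j == d) + q + inJ j.
Proof.
rewrite /Yr. case: eqP => [->|_].
- rewrite (cnt_cons_max (base_all d)) /base inJ_d cnt_zevens.
  have -> : hh.-1 \notin 0 :: evens q.
    rewrite inE evens_mem negb_or negb_and negb_and /hh -!muln2.
    apply/andP; split; first by apply/eqP; lia.
    apply/orP; right. rewrite -ltnNge. lia.
  have -> : 0 < hh by rewrite /hh -muln2; lia.
  by rewrite /= addn0.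
- rewrite /base. case: (inJ j); rewrite ?cnt_odds ?cnt_zevens /=; lia.
Qed.

Lemma Xc_uniq : uniq Xc.
Proof. exact/filter_uniq/iota_uniq. Qed.

Lemma runner_Xc j : j < k -> perm_eq (runner k Xc j) (Yr j).
Proof.
move=> jk. apply: uniq_perm; [exact/runner_uniq/Xc_uniq|exact: Yr_uniq|].
move=> a. rewrite runner_mem // /Xc mem_filter mem_iota add0n.
have [e1 e2] := divmod_eq a k0 jk. rewrite e1 e2.
apply/andP/idP => [[]//|ain]; split => //.
have := allP (Yr_all j) a ain. nia.
Qed.

Lemma size_Xc : size Xc = (k * q.+1).+1.
Proof.
rewrite (size_runner _ k0) (eq_bigr (fun j : 'I_k => size (Yr j))); last first.
  by move=> j _; rewrite (perm_size (runner_Xc (ltn_ord j))).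
rewrite (eq_bigr (fun j : 'I_k => ((j : nat) == d : nat) + q.+1)); last by move=> j _; rewrite size_Yr.
rewrite big_split /= sum_eq_nat dk sum_const_ord. lia.
Qed.

Lemma A_Xc : A k Xc = (k * q + i).+1.
Proof.
rewrite (A_runner _ k0) (eq_bigr (fun j : 'I_k => cnt (Yr j))); last first.
  by move=> j _; rewrite (cnt_perm (runner_Xc (ltn_ord j))).
rewrite (eq_bigr (fun j : 'I_k => ((j : nat) == d : nat) + q + inJ j)); last by move=> j _; rewrite cnt_Yr.
rewrite !big_split /= sum_eq_nat dk sum_const_ord sum_inJ. lia.
Qed.

Lemma sumn_Xc : sumn Xc = k * (hh + k * (q * q.+1) + i * q.+1) + (d + q.+1 * 'C(k, 2)).
Proof.
rewrite (sumn_runner _ k0) (eq_bigr (fun j : 'I_k => k * sumn (Yr j) + j * size (Yr j))); last first.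
  move=> j _. have P := runner_Xc (ltn_ord j). by rewrite (perm_sumn P) (perm_size P).
rewrite big_split /= -big_distrr /=.
rewrite (eq_bigr (fun j : 'I_k => ((j : nat) == d) * hh + q * q.+1 + inJ j * q.+1)); last by move=> j _; rewrite sumn_Yr.
rewrite !big_split /= -!big_distrl /= sum_eq_nat dk sum_const_ord sum_inJ.
rewrite (eq_bigr (fun j : 'I_k => j * ((j : nat) == d) + j * q.+1)); last first.
  by move=> j _; rewrite size_Yr mulnDr.
rewrite big_split /= sum_mul_eq dk -big_distrl /= sum_id_ord. lia.
Qed.

End Constr.

Lemma g_eq k q i : 0 < k -> i < k -> g k (q * k + i) = k * k * 'C(q + 1, 2) + k * (q + 1) * i.
Proof. move=> k0 ik. have [e1 e2] := divmod_eq q k0 ik. by rewrite /g e1 e2. Qed.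

Lemma bin2_S n : 'C(n.+1, 2) * 2 = n.+1 * n.
Proof. by rewrite bin2_2 subn1. Qed.

Lemma binM k T : 'C(k * T, 2) = k * k * 'C(T, 2) + T * 'C(k, 2).
Proof.
elim: T => [|T IH]; first by rewrite muln0 (_ : 'C(0, 2) = 0) // muln0.
rewrite mulnS addnC bin2D IH binS bin1. ring.
Qed.

Lemma constr_identity k q i w d : 0 < k -> i < k ->
  k * (q.*2 + 2 + w + k * (q * q.+1) + i * q.+1) + (d + q.+1 * 'C(k, 2))
  = (g k (q * k + i + 1) + w * k + d) + 'C((k * q.+1).+1, 2).
Proof.
move=> k0 ik.
have e : q * q.+1 = 'C(q.+1, 2) * 2 by rewrite bin2_S mulnC.
rewrite binS bin1 binM e -muln2.
case: (ltnP i.+1 k) => H.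
- have -> : q * k + i + 1 = q * k + i.+1 by rewrite addn1 addnS.
  rewrite g_eq // addn1.
  move: ('C(q.+1, 2)) ('C(k, 2)) => a b. ring.
- have ei : i.+1 = k by lia.
  have -> : q * k + i + 1 = q.+1 * k + 0 by rewrite addn0 addn1 -addnS ei mulSn addnC.
  have e2 : 'C(q.+2, 2) = 'C(q.+1, 2) + q.+1 by rewrite binS bin1.
  rewrite g_eq // addn1 e2 -ei.
  move: ('C(q.+1, 2)) ('C(i.+1, 2)) => a b. ring.
Qed.

Lemma nseq1_partition n : partition_of n (nseq n 1).
Proof.
rewrite /partition_of /is_partition sumn_nseq mul1n eqxx andbT.
apply/andP; split.
- elim: n => [|n IH] //=. by case: n IH => [|n] //=.
- by apply/allP => x /nseqP [->].
Qed.

Lemma lower_bound k n M : 0 < k -> g k M <= n ->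
  exists l, partition_of n l /\ M <= alpha k l.
Proof.
move=> k0 HM. case: M HM => [|m] HM.
  by exists (nseq n 1); split; [exact: nseq1_partition|].
set q := m %/ k. set i := m %% k.
set diff := n - g k m.+1. set w := diff %/ k. set d := diff %% k.
have ik : i < k by rewrite ltn_pmod.
have dk : d < k by rewrite ltn_pmod.
have em : m = q * k + i by rewrite /q /i -divn_eq.
have en : n = g k m.+1 + w * k + d by rewrite -addnA /w /d -divn_eq /diff subnKC.
apply: (@partition_from (Xc k q i w d) n m.+1 k k0).
- exact: Xc_uniq.
- by rewrite sumn_Xc // size_Xc // constr_identity // en em addn1.
- rewrite (A_Xc q w k0 ik dk) em. lia.
Qed.

Lemma g_ge k m : 0 < k -> m <= g k m.
Proof.
move=> k0. rewrite {1}(divn_eq m k) /g. set q := m %/ k. set i := m %% k.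
have ik : i < k by rewrite ltn_pmod.
have h : q <= 'C(q + 1, 2) by rewrite addn1 binS bin1 leq_addl.
have h2 : k <= k * k by rewrite leq_pmull.
have h3 : q * k <= k * k * 'C(q + 1, 2).
  rewrite mulnC. apply: leq_mul => //.
nia.
Qed.

Lemma g_step k m : 0 < k -> g k m <= g k m.+1.
Proof.
move=> k0. rewrite {1}(divn_eq m k). set q := m %/ k. set i := m %% k.
have ik : i < k by rewrite ltn_pmod.
have em : m.+1 = q * k + i.+1 by rewrite {1}(divn_eq m k) addnS.
rewrite g_eq //. case: (ltnP i.+1 k) => H.
- rewrite em g_eq //. rewrite leq_add2l leq_mul2l. by rewrite leqnSn orbT.
- have ei : i.+1 = k by lia.
  have -> : m.+1 = q.+1 * k + 0 by rewrite em ei mulSn addnC addn0.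
  rewrite g_eq // muln0 addn0 !addn1.
  have e2 : 'C(q.+2, 2) = 'C(q.+1, 2) + q.+1 by rewrite binS bin1.
  rewrite e2 mulnDr leq_add2l -ei. nia.
Qed.

Lemma g_mono k m m' : 0 < k -> m <= m' -> g k m <= g k m'.
Proof.
move=> k0 /subnK <-. elim: (m' - m) => [|t IH] //=.
exact: leq_trans IH (g_step _ k0).
Qed.

Definition Bn (k n : nat) : nat := \sum_(1 <= m < n.+1) (g k m <= n).

Lemma ub_Bn k n m : 0 < k -> g k m <= n -> m <= Bn k n.
Proof.
move=> k0 H. have mn : m <= n := leq_trans (g_ge m k0) H.
rewrite /Bn (big_cat_nat (n := m.+1)) //= ?ltnS //.
apply: leq_trans (leq_addr _ _).
rewrite big_nat_cond (eq_bigr (fun _ => 1)); last first.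
  move=> j /andP [/andP [_ jm] _]. by rewrite (leq_trans (g_mono k0 (jm : j <= m)) H).
rewrite -big_nat_cond sum_nat_const_nat. lia.
Qed.

Lemma sum_lt_bound a N M : \sum_(a <= m < N) (m < M : nat) <= M - a.
Proof.
elim: N => [|N IH]; first by rewrite big_geq.
case: (leqP a N) => aN; last by rewrite big_geq.
rewrite big_nat_recr //=. case: (ltnP N M) => H.
- rewrite (eq_big_nat _ _ (F2 := fun _ => 1)); last first.
    move=> j /andP [_ jN]. by rewrite (ltn_trans jN H).
  rewrite sum_nat_const_nat. lia.
- lia.
Qed.

Lemma lb_Bn k n : 0 < k -> g k (Bn k n) <= n.
Proof.
move=> k0. set M := Bn k n. case: (leqP (g k M) n) => // H.
have M0 : 0 < M by case: M H => //; rewrite /g div0n mod0n muln0 addn0 (_ : 'C(0 + 1, 2) = 0) // muln0.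
exfalso.
have : M <= M - 1.
  rewrite {1}/M /Bn. apply: leq_trans (sum_lt_bound 1 n.+1 M).
  rewrite big_nat_cond [X in _ <= X]big_nat_cond. apply: leq_sum => j _.
  case: (leqP (g k j) n) => // hj. case: (ltnP j M) => // jM. have := g_mono k0 jM. lia.
lia.
Qed.

Lemma size_leq_sumn_pos (l : seq nat) : all (fun x => 0 < x) l -> size l <= sumn l.
Proof. elim: l => [|x l IH] //= /andP [x0 /IH h]. lia. Qed.

Lemma tuple_encode n l : partition_of n l -> exists s : n.-tuple 'I_n.+1, tseq s = l.
Proof.
move=> /andP [/andP [Hs Hpos] /eqP Hn].
have szl : size l <= n by rewrite -Hn size_leq_sumn_pos.
set sq := [seq (inord x : 'I_n.+1) | x <- l ++ nseq (n - size l) 0].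
have szq : size sq == n by rewrite size_map size_cat size_nseq subnKC.
exists (Tuple szq). rewrite /tseq /=.
have -> : [seq val x | x <- sq] = l ++ nseq (n - size l) 0.
  rewrite -map_comp map_id_in // => x. rewrite mem_cat => /orP [xl|/nseqP [-> _]].
  - rewrite /= inordK // ltnS -Hn. exact: mem_leq_sumn.
  - by rewrite /= inordK.
rewrite filter_cat (eq_in_filter (a2 := predT)); last by move=> x /(allP Hpos).
rewrite filter_predT. rewrite (eq_in_filter (a2 := pred0)); last by move=> x /nseqP [->].
by rewrite filter_pred0 cats0.
Qed.

Lemma b_eq_Bn n k : 0 < k -> b n k = Bn k n.
Proof.
move=> k0. apply/eqP. rewrite eqn_leq. apply/andP; split.
- apply/bigmax_leqP => s /andP [/andP [Hs _] /eqP Hn].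
  apply: ub_Bn => //. have := upper_bound k0 Hs. by rewrite Hn.
- have [l [Hl Hal]] := lower_bound k0 (lb_Bn n k0).
  have [s Hs] := tuple_encode Hl.
  apply: leq_trans Hal _. rewrite -Hs. apply: leq_bigmax_cond. by rewrite Hs.
Qed.

Definition cF (k t n : nat) : nat := \sum_(i < k) (n == 'C(t, 2) * k ^ 2 + t * k * i : nat).

Lemma bin2_ge t : t.-1 <= 'C(t, 2).
Proof. case: t => [|t] //. by rewrite binS bin1 leq_addl. Qed.

Lemma cF_zero k t n : 0 < k -> n.+2 <= t -> cF k t n = 0.
Proof.
move=> k0 Ht. apply: big1 => i _. apply/eqP. rewrite eqb0. apply/eqP => E.
have h1 := bin2_ge t. have h2 : 1 <= k ^ 2 by rewrite expn_gt0 k0.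
have h3 : 'C(t, 2) <= 'C(t, 2) * k ^ 2 by rewrite leq_pmulr.
lia.
Qed.

Lemma reindex k T (F : nat -> nat -> nat) : 0 < k ->
  \sum_(1 <= t < T.+1) \sum_(i < k) F t i = \sum_(0 <= m < T * k) F (m %/ k).+1 (m %% k).
Proof.
move=> k0. elim: T => [|T IH]; first by rewrite !big_geq.
rewrite big_nat_recr //= IH.
rewrite [RHS](big_cat_nat (n := T * k) (leq0n _)); last exact: leq_mul (leqnSn T) (leqnn k).
congr (_ + _).
rewrite -{1}(add0n (T * k)) big_addn mulSn addnK big_mkord.
apply: eq_bigr => i _. rewrite addnC. by have [-> ->] := divmod_eq T k0 (ltn_ord i).
Qed.

Lemma count_total k n : 0 < k ->
  \sum_(i < n.+1) \sum_(1 <= t < i.+2) cF k t i = (Bn k n).+1.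
Proof.
move=> k0.
have step1 : \sum_(i < n.+1) \sum_(1 <= t < i.+2) cF k t i
           = \sum_(i < n.+1) \sum_(1 <= t < n.+2) cF k t i.
  apply: eq_bigr => i _.
  rewrite [RHS](big_cat_nat (n := i.+2)) //=; last by have := ltn_ord i; lia.
  rewrite [X in _ = _ + X]big_nat_cond [X in _ = _ + X]big1 ?addn0 // => t /andP [/andP [h _] _].
  exact: cF_zero.
rewrite step1 exchange_big /=.
have step2 : forall t, \sum_(i < n.+1) cF k t i
     = \sum_(j < k) ('C(t, 2) * k ^ 2 + t * k * j <= n : nat).
  move=> t. rewrite /cF exchange_big /=. apply: eq_bigr => j _.
  by rewrite sum_eq_nat ltnS.
rewrite (eq_bigr _ (fun t _ => step2 t)).
rewrite (@reindex k n.+1 (fun t j => ('C(t, 2) * k ^ 2 + t * k * j <= n : nat)) k0).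
rewrite (eq_bigr (fun m => (g k m <= n : nat))); last first.
  move=> m _. rewrite /g addn1 -mulnn. set c := 'C(_, 2). set t := (m %/ k).+1.
  have -> : c * (k * k) + t * k * (m %% k) = k * k * c + k * t * (m %% k) by ring.
  by [].
rewrite big_ltn ?muln_gt0 ?k0 //.
have g0 : g k 0 = 0 by rewrite /g div0n mod0n muln0 addn0 (_ : 'C(0 + 1, 2) = 0) // muln0.
rewrite g0 leq0n add1n. congr (_.+1).
rewrite (big_cat_nat (n := n.+1)) //=; last by rewrite leq_pmulr.
rewrite [X in _ + X = _]big_nat_cond [X in _ + X = _]big1 ?addn0 // => m /andP [/andP [h _] _].
apply/eqP. rewrite eqb0 -ltnNge. exact: leq_trans h (g_ge m k0).
Qed.

Local Open Scope ring_scope.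

Lemma fps_ext (f g : fps) : (forall n, f n = g n) -> f = g.
Proof. move=> H. exact: functional_extensionality H. Qed.

Lemma sum_if_eq_int N c (G : nat -> int) :
  \sum_(j < N) (if (j : nat) == c then G j else 0) = if (c < N)%N then G c else 0.
Proof.
elim: N => [|N IH]; first by rewrite big_ord0.
rewrite big_ord_recr /= IH. case: (ltngtP c N) => H.
- by rewrite addr0 ltnS ltnW.
- by rewrite addr0 ltnS leqNgt H.
- by rewrite H add0r ltnSn.
Qed.

Lemma mono_mul c (F : fps) n : fps_mul (fps_mono c) F n = if (c <= n)%N then F (n - c)%N else 0.
Proof.
rewrite /fps_mul /fps_mono.
rewrite (eq_bigr (fun i : 'I_n.+1 => if (i : nat) == c then F (n - c)%N else 0)).
  by rewrite (sum_if_eq_int n.+1 c (fun _ => F (n - c)%N)) ltnS.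
move=> i _. case: eqP => [->|_]; by rewrite ?mul1r ?mul0r.
Qed.

Lemma one_mul (F : fps) n : fps_mul fps_one F n = F n.
Proof. have := mono_mul 0 F n. by rewrite subn0. Qed.

Lemma pow_mono a j : fps_pow (fps_mono a) j = fps_mono (a * j).
Proof.
elim: j => [|j IH]; first by apply: fps_ext => n; rewrite muln0.
rewrite /fps_pow iterS -/(fps_pow _ j) IH. apply: fps_ext => n.
rewrite mono_mul /fps_mono mulnS. case: leqP => h.
- have -> : (n - a == a * j)%N = (n == a + a * j)%N by apply/eqP/eqP; lia.
  by [].
- case: eqP => // E. lia.
Qed.

Lemma sub_sub a : fps_sub fps_one (fps_sub fps_one (fps_mono a)) = fps_mono a.
Proof. apply: fps_ext => n. by rewrite /fps_sub opprB addrC subrK. Qed.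

Lemma inv_mono a n : (0 < a)%N ->
  fps_inv (fps_sub fps_one (fps_mono a)) n = if (a %| n)%N then 1 else 0.
Proof.
move=> a0. rewrite /fps_inv sub_sub.
rewrite (eq_bigr (fun j : 'I_n.+1 => if (n == a * j)%N then 1 else 0)); last first.
  by move=> j _; rewrite pow_mono.
case: (boolP (a %| n)%N) => H.
- have [m Em] : exists m, n = (m * a)%N by exists (n %/ a)%N; rewrite divnK.
  rewrite (eq_bigr (fun j : 'I_n.+1 => if (j : nat) == m then 1 else 0)).
    rewrite (sum_if_eq_int n.+1 m (fun _ => 1)) ltnS Em leq_pmulr //.
  move=> j _. have E2 : (n == a * j)%N = ((j : nat) == m) by apply/eqP/eqP => E; nia.
  by rewrite E2.
- apply: big1 => j _. case: eqP => // E. by rewrite E dvdn_mulr in H.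
Qed.

Lemma mul_sub_one_mono u (H : fps) n :
  fps_mul (fps_sub fps_one (fps_mono u)) H n = H n - (if (u <= n)%N then H (n - u)%N else 0).
Proof.
rewrite /fps_mul.
rewrite (eq_bigr (fun i : 'I_n.+1 => fps_one i * H (n - i)%N - fps_mono u i * H (n - i)%N)); last first.
  by move=> i _; rewrite /fps_sub mulrBl.
rewrite sumrB. congr (_ - _); [exact: one_mul | exact: mono_mul].
Qed.

Lemma quot_coef k t n : (0 < k)%N -> (0 < t)%N ->
  fps_div (fps_sub fps_one (fps_mono (t * k ^ 2))) (fps_sub fps_one (fps_mono (t * k))) n
  = (\sum_(i < k) (n == t * k * i)%N : nat)%:Z.
Proof.
move=> k0 t0. rewrite /fps_div mul_sub_one_mono !inv_mono ?muln_gt0 ?k0 ?t0 //.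
set v := (t * k)%N. have v0 : (0 < v)%N by rewrite muln_gt0 t0 k0.
have eu : (t * k ^ 2 = v * k)%N by rewrite /v -mulnn mulnA.
rewrite eu.
case: (boolP (v %| n)%N) => H.
- have [m Em] : exists m, n = (m * v)%N by exists (n %/ v)%N; rewrite divnK.
  rewrite (eq_bigr (fun j : 'I_k => ((j : nat) == m : nat))); last first.
    move=> j _. by rewrite Em mulnC eqn_pmul2l // eq_sym.
  rewrite sum_eq_nat Em (mulnC m v) leq_pmul2l //.
  case: (leqP k m) => hk.
  + have -> : (v %| v * m - v * k)%N by rewrite -mulnBr dvdn_mulr.
    by rewrite subrr.
  + by rewrite subr0.
- rewrite big1; last first.
    move=> j _. apply/eqP. rewrite eqb0. apply/negP => /eqP E. by rewrite E dvdn_mulr in H.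
  case: leqP => h; last by rewrite subr0.
  case: (boolP (v %| n - v * k)%N) => H2; last by rewrite subr0.
  exfalso. move: H. rewrite (_ : n = (n - v * k) + v * k)%N; last by rewrite subnK.
  by rewrite dvdn_add // dvdn_mulr.
Qed.

Lemma term_coef k t n : (0 < k)%N -> (0 < t)%N ->
  fps_mul (fps_mono ('C(t, 2) * k ^ 2))
          (fps_div (fps_sub fps_one (fps_mono (t * k ^ 2))) (fps_sub fps_one (fps_mono (t * k)))) n
  = (cF k t n)%:Z.
Proof.
move=> k0 t0. rewrite mono_mul. case: leqP => h.
- rewrite quot_coef //. congr (Posz _). apply: eq_bigr => i _.
  have -> : (n - 'C(t, 2) * k ^ 2 == t * k * i)%N = (n == 'C(t, 2) * k ^ 2 + t * k * i)%N.
    apply/eqP/eqP; lia.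
  by [].
- rewrite /cF big1 // => i _. apply/eqP. rewrite eqb0. apply/eqP. lia.
Qed.

Lemma sum_Posz (I : Type) (r : seq I) (P : pred I) (F : I -> nat) :
  \sum_(i <- r | P i) (F i)%:Z = (\sum_(i <- r | P i) F i)%N%:Z.
Proof.
elim: r => [|x r IH]; first by rewrite !big_nil.
rewrite !big_cons. case: (P x) => //. by rewrite IH PoszD.
Qed.

Definition Sser (k : nat) : fps := fun n => (\sum_(1 <= t < n.+2) cF k t n)%N%:Z.

Lemma Sser_sum k : (0 < k)%N ->
  fps_sum_from1
      (fun t => fps_mul (fps_mono ('C(t, 2) * k ^ 2))
                  (fps_div (fps_sub fps_one (fps_mono (t * k ^ 2)))
                           (fps_sub fps_one (fps_mono (t * k)))))
      (Sser k).
Proof.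
move=> k0 n. exists n.+2 => M HM.
rewrite big_nat_cond (eq_bigr (fun t => (cF k t n)%:Z)); last first.
  by move=> t /andP [/andP [t1 _] _]; rewrite term_coef.
rewrite -big_nat_cond sum_Posz /Sser. congr (Posz _).
rewrite (big_cat_nat (n := n.+2)) //=.
rewrite [X in (_ + X)%N]big_nat_cond [X in (_ + X)%N]big1 ?addn0 // => t /andP [/andP [h _] _].
exact: cF_zero.
Qed.

Lemma Sser_coef k n : (0 < k)%N ->
  fps_div (fps_sub (Sser k) fps_one) (fps_sub fps_one (fps_mono 1)) n = (Bn k n)%:Z.
Proof.
move=> k0. rewrite /fps_div /fps_mul.
rewrite (eq_bigr (fun i : 'I_n.+1 => Sser k i - fps_one i)); last first.
  by move=> i _; rewrite inv_mono // dvd1n mulr1.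
rewrite sumrB /Sser sum_Posz count_total //.
have -> : \sum_(i < n.+1) fps_one i = 1.
  rewrite /fps_one (sum_if_eq_int n.+1 0 (fun _ => 1)). by [].
by rewrite -addn1 PoszD addrK.
Qed.

Unset Implicit Arguments.
Theorem theorem1p2 (k : nat) (hk : (1 <= k)%N) :
  exists S : fps,
    fps_sum_from1
      (fun t => fps_mul (fps_mono ('C(t, 2) * k ^ 2))
                  (fps_div (fps_sub fps_one (fps_mono (t * k ^ 2)))
                           (fps_sub fps_one (fps_mono (t * k)))))
      S /\
    forall n : nat,
      (b n k)%:Z = fps_div (fps_sub S fps_one) (fps_sub fps_one (fps_mono 1)) n.
Proof.
exists (Sser k). split; first exact: Sser_sum.
move=> n. by rewrite Sser_coef // b_eq_Bn.
Qed.
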